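(* Let $\mathcal{H}$, $C$, $T$, $f_1$, $f_2$, $f$ be as in the context, satisfying (A1), (A2), (A3), assume $\Omega\neq\emptyset$, and let $\{x^k\}$ be generated by the Algorithm. Then for every $x^*\in\Omega$ the sequence of real numbers $\{\|x^k-x^*\|\}_{k\in\mathbb{N}}$ is convergent.
   Context: $\mathcal{H}$ is a real Hilbert space with inner product $\langle\cdot,\cdot\rangle$ and norm $\|\cdot\|$; $C\subseteq\mathcal{H}$ is nonempty, closed and convex; $T:C\to C$ is nonexpansive ($\|T(x)-T(y)\|\le\|x-y\|$ for all $x,y\in C$), with fixed point set $Fix(T)$. $f_1,f_2:\mathcal{H}\times\mathcal{H}\to\mathbb{R}$, $f=f_1+f_2$, and $f_i(x,x)=0$ for all $x\in C$, $i=1,2$. $\partial_2 f_i(x,y)$ denotes the subdifferential of the convex function $f_i(x,\cdot)$ at $y$. Assumptions: (A1) for each $x\in C$, $f_1(x,\cdot)$ and $f_2(x,\cdot)$ are convex and subdifferentiable on an open set containing $C$, and $f(\cdot,x)$ is weakly upper semicontinuous on $C$. (A2) $f$ is pseudo-monotone on $C$: for all $x,y\in C$, $f(x,y)\ge0\Rightarrow f(y,x)\le 0$. (A3) either $\operatorname{int}C\neq\emptyset$, or for every $x\in C$ each $f_i(x,\cdot)$ is continuous at some point of $C$. $Sol(C,f)=\{x\in C: f(x,y)\ge 0\ \forall y\in C\}$; $\Omega=Sol(C,f)\cap Fix(T)$. Algorithm: choose $x^0\in C$, $\gamma\in(0,1)$ and real numbers $\beta_k>0$ ($k\ge0$) with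 $\sum_k\beta_k=+\infty$, $\sum_k\beta_k^2<+\infty$. For $k=0,1,\dots$: take $g_1^k\in\partial_2 f_1(x^k,x^k)$, $g_2^k\in\partial_2 f_2(x^k,x^k)$; set $\eta_k=\max\{\beta_k,\|g_1^k\|,\|g_2^k\|\}$, $\lambda_k=\beta_k/\eta_k$; $y^k=\arg\min\{\lambda_k f_1(x^k,y)+\tfrac12\|y-x^k\|^2 : y\in C\}$, $z^k=\arg\min\{\lambda_k f_2(x^k,y)+\tfrac12\|y-y^k\|^2 : y\in C\}$, $x^{k+1}=\gamma z^k+(1-\gamma)T(x^k)$. *)

(* Defs.v *)
From Stdlib Require Import Reals Lra.
Open Scope R_scope.

Record RHilbert := {
  hcar :> Type;
  hadd : hcar -> hcar -> hcar;
  hzero : hcar;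
  hopp : hcar -> hcar;
  hscal : R -> hcar -> hcar;
  hinner : hcar -> hcar -> R;
  hadd_assoc : forall x y z, hadd x (hadd y z) = hadd (hadd x y) z;
  hadd_comm : forall x y, hadd x y = hadd y x;
  hadd_zero : forall x, hadd x hzero = x;
  hadd_opp : forall x, hadd x (hopp x) = hzero;
  hscal_one : forall x, hscal 1 x = x;
  hscal_assoc : forall a b x, hscal a (hscal b x) = hscal (a * b) x;
  hscal_distr_l : forall a x y, hscal a (hadd x y) = hadd (hscal a x) (hscal a y);
  hscal_distr_r : forall a b x, hscal (a + b) x = hadd (hscal a x) (hscal b x);
  hinner_sym : forall x y, hinner x y = hinner y x;
  hinner_add_l : forall x y z, hinner (hadd x y) z = hinner x z + hinner y z;
  hinner_scal_l : forall a x y, hinner (hscal a x) y = a * hinner x y;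
  hinner_pos : forall x, 0 <= hinner x x;
  hinner_def : forall x, hinner x x = 0 -> x = hzero;
  hcomplete : forall u : nat -> hcar,
    (forall eps, eps > 0 -> exists N, forall n m, (n >= N)%nat -> (m >= N)%nat ->
        sqrt (hinner (hadd (u n) (hopp (u m))) (hadd (u n) (hopp (u m)))) < eps) ->
    exists l, forall eps, eps > 0 -> exists N, forall n, (n >= N)%nat ->
        sqrt (hinner (hadd (u n) (hopp l)) (hadd (u n) (hopp l))) < eps
}.

Arguments hadd {r}. Arguments hzero {r}. Arguments hopp {r}.
Arguments hscal {r}. Arguments hinner {r}.

Section Ops.
Context {H : RHilbert}.

Definition hsub (x y : H) : H := hadd x (hopp y).
Definition hnorm (x : H) : R := sqrt (hinner x x).

(** closed (norm topology; sequential closedness in a metric space) *)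
Definition hclosed_set (C : H -> Prop) : Prop :=
  forall (u : nat -> H) (l : H), (forall n, C (u n)) ->
    Un_cv (fun n => hnorm (hsub (u n) l)) 0 -> C l.

Definition hconvex_set (C : H -> Prop) : Prop :=
  forall x y t, C x -> C y -> 0 <= t <= 1 -> C (hadd (hscal t x) (hscal (1 - t) y)).

Definition hopen_set (U : H -> Prop) : Prop :=
  forall x, U x -> exists r, r > 0 /\ forall y, hnorm (hsub y x) < r -> U y.

Definition hinterior_nonempty (C : H -> Prop) : Prop :=
  exists x r, r > 0 /\ forall y, hnorm (hsub y x) < r -> C y.

Definition hnonexpansive_on (C : H -> Prop) (T : H -> H) : Prop :=
  (forall x, C x -> C (T x)) /\
  forall x y, C x -> C y -> hnorm (hsub (T x) (T y)) <= hnorm (hsub x y).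

Definition hFix (T : H -> H) (C : H -> Prop) (x : H) : Prop := C x /\ T x = x.

Definition hconvex_on (U : H -> Prop) (phi : H -> R) : Prop :=
  forall y z t, U y -> U z -> 0 <= t <= 1 -> U (hadd (hscal t y) (hscal (1 - t) z)) ->
    phi (hadd (hscal t y) (hscal (1 - t) z)) <= t * phi y + (1 - t) * phi z.

Definition hsubgrad (phi : H -> R) (y g : H) : Prop :=
  forall z, phi z >= phi y + hinner g (hsub z y).

Definition hsubdifferentiable_on (U : H -> Prop) (phi : H -> R) : Prop :=
  forall y, U y -> exists g, hsubgrad phi y g.

Definition hcontinuous_at (phi : H -> R) (y : H) : Prop :=
  forall eps, eps > 0 -> exists d, d > 0 /\
    forall z, hnorm (hsub z y) < d -> Rabs (phi z - phi y) < eps.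

Definition hweak_cv (u : nat -> H) (l : H) : Prop :=
  forall w, Un_cv (fun n => hinner (u n) w) (hinner l w).

Definition hweakly_usc_on (C : H -> Prop) (phi : H -> R) : Prop :=
  forall (u : nat -> H) (y : H), (forall n, C (u n)) -> C y -> hweak_cv u y ->
    forall eps, eps > 0 -> exists N, forall n, (n >= N)%nat -> phi (u n) <= phi y + eps.

Definition hpseudo_monotone_on (C : H -> Prop) (f : H -> H -> R) : Prop :=
  forall x y, C x -> C y -> f x y >= 0 -> f y x <= 0.

Definition hSol (C : H -> Prop) (f : H -> H -> R) (x : H) : Prop :=
  C x /\ forall y, C y -> f x y >= 0.

Definition his_argmin (C : H -> Prop) (phi : H -> R) (m : H) : Prop :=
  C m /\ forall y, C y -> phi m <= phi y.

End Ops.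

(* Main.v *)
Require Import Defs.
From Stdlib Require Import Reals Lra Lia.
Open Scope R_scope.

Section HL.
Context {H : RHilbert}.

Lemma hinner_zero_l (c : H) : hinner hzero c = 0.
Proof.
  pose proof (hinner_add_l H hzero hzero c) as E. rewrite hadd_zero in E. lra.
Qed.

Lemma hinner_opp_l (a c : H) : hinner (hopp a) c = - hinner a c.
Proof.
  pose proof (hinner_add_l H a (hopp a) c) as E. rewrite hadd_opp, hinner_zero_l in E. lra.
Qed.

Lemma hinner_add_r (a b c : H) : hinner c (hadd a b) = hinner c a + hinner c b.
Proof. rewrite !(hinner_sym H c). apply hinner_add_l. Qed.
Lemma hinner_scal_r (t : R) (a c : H) : hinner c (hscal t a) = t * hinner c a.
Proof. rewrite !(hinner_sym H c). apply hinner_scal_l. Qed.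
Lemma hinner_opp_r (a c : H) : hinner c (hopp a) = - hinner c a.
Proof. rewrite !(hinner_sym H c). apply hinner_opp_l. Qed.

Lemma hnorm2 (a : H) : hnorm a ^ 2 = hinner a a.
Proof. unfold hnorm. apply pow2_sqrt, hinner_pos. Qed.

End HL.

Ltac hexp := unfold hsub in *;
  repeat (rewrite ?hinner_add_l, ?hinner_add_r, ?hinner_opp_l, ?hinner_opp_r,
                  ?hinner_scal_l, ?hinner_scal_r in *).

Lemma small_t (A B : R) : 0 <= B ->
  (forall t, 0 < t <= 1 -> 0 <= t * A + t * t * B) -> 0 <= A.
Proof.
  intros HB Ht. destruct (Rle_or_lt 0 A) as [|HA]; auto.
  set (t := - A / (B - A + 1)).
  assert (Hd : 0 < B - A + 1) by lra.
  assert (Ht0 : 0 < t) by (unfold t; apply Rdiv_lt_0_compat; lra).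
  assert (HtB : t * (B - A + 1) = - A) by (unfold t; field; lra).
  assert (Ht1 : t <= 1) by nra.
  specialize (Ht t (conj Ht0 Ht1)).
  assert (t * B <= - A) by nra.
  nra.
Qed.

Ltac hsym a b := rewrite ?(hinner_sym _ a b) in *.

Lemma three_point {H : RHilbert} (C U : H -> Prop) (phi : H -> R) (lam : R) (p m : H) :
  hconvex_set C -> (forall y, C y -> U y) -> hconvex_on U phi -> 0 <= lam ->
  his_argmin C (fun w => lam * phi w + / 2 * (hnorm (hsub w p))^2) m ->
  forall w, C w ->
  lam * phi w + / 2 * hinner (hsub w p) (hsub w p) >=
  lam * phi m + / 2 * hinner (hsub m p) (hsub m p) + / 2 * hinner (hsub w m) (hsub w m).
Proof.
  intros HCv HCU Hcv Hlam [Hm Hmin] w Hw.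
  assert (HA : 0 <= lam * (phi w - phi m) + hinner (hsub m p) (hsub w m)).
  { apply (small_t _ (/2 * hinner (hsub w m) (hsub w m))).
    - pose proof (hinner_pos H (hsub w m)); lra.
    - intros t Ht.
      set (wt := hadd (hscal t w) (hscal (1 - t) m)).
      assert (Cwt : C wt) by (apply HCv; auto; lra).
      pose proof (Hmin wt Cwt) as E1. cbv beta in E1.
      pose proof (Hcv w m t (HCU w Hw) (HCU m Hm) ltac:(lra) (HCU wt Cwt)) as E2.
      fold wt in E2.
      rewrite !hnorm2 in E1.
      assert (E3 : hinner (hsub wt p) (hsub wt p) = hinner (hsub m p) (hsub m p)
          + 2 * t * hinner (hsub m p) (hsub w m) + t * t * hinner (hsub w m) (hsub w m)).
      { unfold wt. hexp. hsym m w. hsym p w. hsym p m. ring. }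
      rewrite E3 in E1.
      assert (lam * phi wt <= lam * (t * phi w + (1 - t) * phi m)) by (apply Rmult_le_compat_l; lra).
      nra. }
  assert (E4 : hinner (hsub w p) (hsub w p) = hinner (hsub m p) (hsub m p)
     + 2 * hinner (hsub m p) (hsub w m) + hinner (hsub w m) (hsub w m)).
  { hexp. hsym m w. hsym p w. hsym p m. ring. }
  rewrite E4. lra.
Qed.

Lemma sq_bound1 {H : RHilbert} (al : R) (g v : H) :
  -2 * al * hinner g v <= 2 * al^2 * hinner g g + / 2 * hinner v v.
Proof.
  pose proof (hinner_pos H (hadd (hscal (2 * al) g) v)) as P. hexp.
  rewrite (hinner_sym H v g) in P. nra.
Qed.

Lemma sq_bound2 {H : RHilbert} (al : R) (g v : H) :
  -2 * al * hinner g v <= al^2 * hinner g g + hinner v v.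
Proof.
  pose proof (hinner_pos H (hadd (hscal al g) v)) as P. hexp.
  rewrite (hinner_sym H v g) in P. nra.
Qed.

Lemma split_sub {H : RHilbert} (g z y x : H) :
  hinner g (hsub z x) = hinner g (hsub z y) + hinner g (hsub y x).
Proof. hexp. ring. Qed.

Lemma sub_sym_n {H : RHilbert} (a b : H) :
  hinner (hsub a b) (hsub a b) = hinner (hsub b a) (hsub b a).
Proof. hexp. hsym a b. ring. Qed.

Lemma conv_id {H : RHilbert} (ga : R) (z u s : H) :
  hinner (hsub (hadd (hscal ga z) (hscal (1 - ga) u)) s) (hsub (hadd (hscal ga z) (hscal (1 - ga) u)) s)
  = ga * hinner (hsub z s) (hsub z s) + (1 - ga) * hinner (hsub u s) (hsub u s)
    - ga * (1 - ga) * hinner (hsub z u) (hsub z u).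
Proof. hexp. hsym u z. hsym s z. hsym s u. ring. Qed.

Lemma shift_cv (u : nat -> R) (l : R) : Un_cv (fun n => u (S n)) l -> Un_cv u l.
Proof.
  intros Hc eps He. destruct (Hc eps He) as [N HN]. exists (S N).
  intros n Hn. destruct n as [|m]; [lia|]. apply HN. lia.
Qed.
Theorem proposition3p1
  (H : RHilbert) (C : H -> Prop) (T : H -> H) (f1 f2 : H -> H -> R)
  (HCne : exists c, C c) (HCcl : hclosed_set C) (HCcv : hconvex_set C)
  (HT : hnonexpansive_on C T)
  (Hf1 : forall x, C x -> f1 x x = 0) (Hf2 : forall x, C x -> f2 x x = 0)
  (* (A1) *)
  (HA1a : forall x, C x -> exists U : H -> Prop, hopen_set U /\ (forall y, C y -> U y) /\
      hconvex_on U (f1 x) /\ hconvex_on U (f2 x) /\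
      hsubdifferentiable_on U (f1 x) /\ hsubdifferentiable_on U (f2 x))
  (HA1b : forall x, C x -> hweakly_usc_on C (fun y => f1 y x + f2 y x))
  (* (A2) *)
  (HA2 : hpseudo_monotone_on C (fun x y => f1 x y + f2 x y))
  (* (A3) *)
  (HA3 : hinterior_nonempty C \/
         (forall x, C x -> (exists y, C y /\ hcontinuous_at (f1 x) y) /\
                           (exists y, C y /\ hcontinuous_at (f2 x) y)))
  (* Omega nonempty *)
  (HOm : exists xs, hSol C (fun x y => f1 x y + f2 x y) xs /\ hFix T C xs)
  (* algorithm *)
  (x y z g1 g2 : nat -> H) (gamma : R) (beta : nat -> R)
  (Hx0 : C (x 0%nat)) (Hgamma : 0 < gamma < 1)
  (Hbeta : forall k, beta k > 0)
  (Hbeta_div : cv_infty (fun n => sum_f_R0 beta n))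
  (Hbeta_sq : exists l, Un_cv (fun n => sum_f_R0 (fun k => (beta k)^2) n) l)
  (Hg1 : forall k, hsubgrad (f1 (x k)) (x k) (g1 k))
  (Hg2 : forall k, hsubgrad (f2 (x k)) (x k) (g2 k))
  (Hy : forall k,
     let lam := beta k / Rmax (beta k) (Rmax (hnorm (g1 k)) (hnorm (g2 k))) in
     his_argmin C (fun w => lam * f1 (x k) w + / 2 * (hnorm (hsub w (x k)))^2) (y k))
  (Hz : forall k,
     let lam := beta k / Rmax (beta k) (Rmax (hnorm (g1 k)) (hnorm (g2 k))) in
     his_argmin C (fun w => lam * f2 (x k) w + / 2 * (hnorm (hsub w (y k)))^2) (z k))
  (Hxs : forall k, x (S k) = hadd (hscal gamma (z k)) (hscal (1 - gamma) (T (x k)))) :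
  forall xs, hSol C (fun x y => f1 x y + f2 x y) xs -> hFix T C xs ->
    exists l, Un_cv (fun k => hnorm (hsub (x k) xs)) l.
Proof.
  intros xs Hsol Hfix.
  destruct Hsol as [Cxs Hsolf]. destruct Hfix as [_ Txs].
  destruct HT as [HTC HTn].
  assert (Cx : forall k, C (x k)).
  { induction k as [|k IH]; auto. rewrite Hxs. apply HCcv.
    - destruct (Hz k) as [Hzk _]; auto.
    - apply HTC; auto.
    - lra. }
  set (a := fun k => hinner (hsub (x k) xs) (hsub (x k) xs)).
  assert (Step : forall k, a (S k) <= a k + 5 * beta k ^ 2).
  { intro k. unfold a.
    pose proof (Hy k) as Hyk. pose proof (Hz k) as Hzk. cbv zeta in Hyk, Hzk.
    set (eta := Rmax (beta k) (Rmax (hnorm (g1 k)) (hnorm (g2 k)))) in *.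
    set (lam := beta k / eta) in *.
    pose proof (Hbeta k) as Hb.
    assert (He1 : beta k <= eta) by apply Rmax_l.
    assert (He2 : hnorm (g1 k) <= eta) by (eapply Rle_trans; [apply Rmax_l|apply Rmax_r]).
    assert (He3 : hnorm (g2 k) <= eta) by (eapply Rle_trans; [apply Rmax_r|apply Rmax_r]).
    assert (Hlam : 0 < lam) by (unfold lam; apply Rdiv_lt_0_compat; lra).
    assert (Bd : forall g : H, hnorm g <= eta -> lam ^ 2 * hinner g g <= beta k ^ 2).
    { intros g Hg. rewrite <- hnorm2.
      assert (lam * hnorm g <= beta k).
      { unfold lam. unfold Rdiv. rewrite Rmult_assoc, (Rmult_comm (/ eta)).
        rewrite <- (Rmult_1_r (beta k)) at 2. apply Rmult_le_compat_l; [lra|].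
        rewrite <- (Rinv_r eta) by lra. apply Rmult_le_compat_r.
        - left. apply Rinv_0_lt_compat. lra.
        - auto. }
      assert (0 <= hnorm g) by (unfold hnorm; apply sqrt_pos).
      replace (lam ^ 2 * hnorm g ^ 2) with ((lam * hnorm g) ^ 2) by ring.
      apply pow_incr. split; [apply Rmult_le_pos; lra|auto]. }
    pose proof (Bd _ He2) as B1. pose proof (Bd _ He3) as B2.
    destruct (HA1a (x k) (Cx k)) as (U & _ & HCU & Hc1 & Hc2 & _ & _).
    pose proof (three_point C U (f1 (x k)) lam (x k) (y k) HCcv HCU Hc1 ltac:(lra) Hyk xs Cxs) as TP1.
    pose proof (three_point C U (f2 (x k)) lam (y k) (z k) HCcv HCU Hc2 ltac:(lra) Hzk xs Cxs) as TP2.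
    assert (PM : lam * f1 (x k) xs + lam * f2 (x k) xs <= 0).
    { pose proof (HA2 xs (x k) Cxs (Cx k) (Hsolf (x k) (Cx k))). nra. }
    assert (S1 : lam * f1 (x k) (y k) >= lam * hinner (g1 k) (hsub (y k) (x k))).
    { pose proof (Hg1 k (y k)) as G. rewrite Hf1 in G by auto. nra. }
    assert (S2 : lam * f2 (x k) (z k) >= lam * hinner (g2 k) (hsub (z k) (y k))
                   + lam * hinner (g2 k) (hsub (y k) (x k))).
    { pose proof (Hg2 k (z k)) as G. rewrite Hf2 in G by auto.
      rewrite (split_sub (g2 k) (z k) (y k) (x k)) in G. nra. }
    pose proof (sq_bound1 lam (g1 k) (hsub (y k) (x k))) as Q1.
    pose proof (sq_bound1 lam (g2 k) (hsub (y k) (x k))) as Q2.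
    pose proof (sq_bound2 lam (g2 k) (hsub (z k) (y k))) as Q3.
    assert (Nz : hinner (hsub (z k) xs) (hsub (z k) xs) <=
                 hinner (hsub (x k) xs) (hsub (x k) xs) + 5 * beta k ^ 2).
    { rewrite (sub_sym_n (z k) xs), (sub_sym_n (x k) xs). lra. }
    assert (NT : hinner (hsub (T (x k)) xs) (hsub (T (x k)) xs) <=
                 hinner (hsub (x k) xs) (hsub (x k) xs)).
    { pose proof (HTn (x k) xs (Cx k) Cxs) as N. rewrite Txs in N.
      apply sqrt_le_0; try apply hinner_pos. exact N. }
    rewrite Hxs, conv_id.
    pose proof (hinner_pos H (hsub (z k) (T (x k)))).
    assert (0 <= gamma * (1 - gamma)) by nra.
    nra. }
  set (Sb := fun n => sum_f_R0 (fun k => beta k ^ 2) n).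
  destruct Hbeta_sq as [l Hl].
  assert (Sg : Un_growing Sb).
  { intro n. unfold Sb. simpl. pose proof (pow2_ge_0 (beta (S n))). lra. }
  assert (Sle : forall n, Sb n <= l) by (apply growing_ineq; auto).
  set (c := fun n => a (S n) - 5 * Sb n).
  assert (Cd : Un_decreasing c).
  { intro n. unfold c, Sb. simpl. pose proof (Step (S n)). lra. }
  assert (Clb : has_lb c).
  { exists (5 * l). intros r [n ->]. unfold opp_seq, c.
    assert (0 <= a (S n)) by (unfold a; apply hinner_pos).
    pose proof (Sle n). lra. }
  destruct (decreasing_cv c Cd Clb) as [Lc HLc].
  assert (Ha : Un_cv a (Lc + 5 * l)).
  { apply shift_cv.
    assert (E : Un_cv (fun n => c n + 5 * Sb n) (Lc + 5 * l)).
    { apply CV_plus; auto. intros eps He. destruct (Hl (eps / 5)) as [N HN]; [lra|].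
      exists N. intros n Hn. specialize (HN n Hn). unfold R_dist in *.
      replace (5 * Sb n - 5 * l) with (5 * (Sb n - l)) by ring.
      rewrite Rabs_mult, Rabs_right by lra. unfold Sb. lra. }
    intros eps He. destruct (E eps He) as [N HN]. exists N. intros n Hn.
    specialize (HN n Hn). unfold c in HN.
    replace (a (S n) - 5 * Sb n + 5 * Sb n) with (a (S n)) in HN by ring. exact HN. }
  assert (L0 : 0 <= Lc + 5 * l).
  { apply (@Rle_cv_lim (fun _ : nat => 0) a 0 (Lc + 5 * l)); auto.
    - intro n. unfold a. apply hinner_pos.
    - intros eps He. exists 0%nat. intros. unfold R_dist. rewrite Rminus_diag, Rabs_R0. lra. }
  exists (sqrt (Lc + 5 * l)).
  exact (continuity_seq sqrt a _ (continuity_pt_sqrt _ L0) Ha).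
Qed.
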